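(* Let $q$ be a prime power, let $\pi$ be the plane $x_4=0$ and $T=\langle(0,0,0,1)\rangle$ in ${\rm PG}(3,q)$, and let $C$ be the group defined in the context. Then $C$ has $q+1$ orbits, each of size $q^3-1$, on the lines of ${\rm PG}(3,q)$ not contained in $\pi$ and not passing through $T$, and $C$ acts semiregularly on the $q^3-1$ points of ${\rm PG}(3,q)\setminus(\pi\cup\{T\})$.
   Context: Points of ${\rm PG}(3,q)$ are $\langle(x_1,x_2,x_3,x_4)\rangle$ (column vectors, matrices acting on the left). Let $\sigma\in{\rm GL}(3,q)$ be a Singer cycle (element of order $q^3-1$). $C$ is the group of projectivities of ${\rm PG}(3,q)$ induced by the matrices $\begin{pmatrix} A & 0\\ 0 & 1\end{pmatrix}$ with $A\in\langle\sigma\rangle$; it has order $q^3-1$, fixes $T$ and $\pi$, induces on $\pi$ a Singer cyclic group $C_1$ of ${\rm PGL}(3,q)$ (order $q^2+q+1$), and contains the $q-1$ homologies with centre $T$ and axis $\pi$. *)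

(* Defs.v *)
From HB Require Import structures.
From mathcomp Require Import all_boot all_order all_algebra all_fingroup all_field.
Set Implicit Arguments. Unset Strict Implicit. Unset Printing Implicit Defensive.
Import GRing.Theory.
Local Open Scope ring_scope.

(* Vectors of F^4 are row vectors
   'rV[F]_4; a projective subspace is represented by the canonical square
   matrix <<U>>%MS of the corresponding vector subspace (its row space). *)

Section PG3.
Variable F : finFieldType.

Definition PGpoints : {set 'M[F]_4} :=
  [set U : 'M[F]_4 | (\rank U == 1)%N && (<<U>>%MS == U)].

Definition PGlines : {set 'M[F]_4} :=
  [set U : 'M[F]_4 | (\rank U == 2)%N && (<<U>>%MS == U)].

Definition piPlane : 'M[F]_4 := pid_mx 3.

Definition Tvec : 'rV[F]_4 := delta_mx 0 ord_max.
Definition Tpoint : 'M[F]_4 := <<Tvec>>%MS.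

(* The projectivity induced by the matrix g acting on column vectors x |-> g x;
   on row vectors this is v |-> v g^T; it maps subspace U to <<U g^T>>. *)
Definition pact (g U : 'M[F]_4) : 'M[F]_4 := <<U *m g^T>>%MS.

Definition Cgroup (sigma : {'GL_3[F]}) : {set 'M[F]_4} :=
  [set (block_mx (GLval a) 0 0 1%:M : 'M[F]_(3 + 1)) | a : {'GL_3[F]} in <[sigma]>%g].

Definition Lset : {set 'M[F]_4} :=
  [set U in PGlines | ~~ (U <= piPlane)%MS & ~~ (Tvec <= U)%MS].

Definition Pset : {set 'M[F]_4} :=
  [set U in PGpoints | ~~ (U <= piPlane)%MS & U != Tpoint].

Definition Corbit (sigma : {'GL_3[F]}) (U : 'M[F]_4) : {set 'M[F]_4} :=
  [set pact g U | g in Cgroup sigma].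

End PG3.

(* Main.v *)
From HB Require Import structures.
From mathcomp Require Import all_boot all_order all_algebra all_fingroup all_solvable all_field.
Set Implicit Arguments. Unset Strict Implicit. Unset Printing Implicit Defensive.
Import GRing.Theory.
Local Open Scope ring_scope.

Require Import Defs.
From mathcomp Require Import zify.
Section Singer.
Variable F : finFieldType.
Variable s : {'GL_3[F]}.
Hypothesis Hs : #[s]%g = (#|F| ^ 3 - 1)%N.
Local Notation A := (GLval s).
Local Notation N := (#|F| ^ 3 - 1)%N.

Lemma GLvalX k : GLval (s ^+ k)%g = A ^+ k.
Proof. by elim: k => [|k IH]; rewrite ?expg0 ?expr0 // expgS GL_ME IH exprS. Qed.

Let d := degree_mxminpoly A.
Let P := [set horner_mx A (rVpoly u) | u : 'rV[F]_d].

Lemma hornerP p : horner_mx A p \in P.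
Proof.
apply/imsetP; exists (poly_rV (p %% mxminpoly A)) => //.
by rewrite poly_rV_K ?size_mod_mxminpoly // -horner_mxK mx_inv_hornerK // horner_mx_mem.
Qed.

Lemma d_le3 : (d <= 3)%N.
Proof.
have := dvdp_leq (monic_neq0 (char_poly_monic A)) (mxminpoly_dvd_char A).
by rewrite size_mxminpoly size_char_poly.
Qed.

Lemma q_gt1 : (1 < #|F|)%N.
Proof. by rewrite (cardD1 0) (cardD1 1) !inE oner_neq0. Qed.

Lemma cardP : (#|P| = #|F| ^ d)%N.
Proof.
by rewrite card_imset; [rewrite card_mx mul1n | exact: horner_rVpoly_inj].
Qed.

Let X := [set A ^+ k | k : 'I_N].

Lemma cardX : #|X| = N.
Proof.
rewrite card_imset ?card_ord // => i j /= eij.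
have : (s ^+ i == s ^+ j)%g by apply/eqP/val_inj; rewrite /= !GLvalX.
rewrite eq_expg_mod_order Hs !modn_small // => /eqP; exact: val_inj.
Qed.

Lemma unitA k : A ^+ k \is a GRing.unit.
Proof. by rewrite unitrX // GL_unit. Qed.

Lemma XP : X = P :\ 0.
Proof.
apply/eqP; rewrite eqEcard; apply/andP; split.
  apply/subsetP => _ /imsetP[k _ ->]; rewrite !inE.
  have nz : A ^+ k != 0 by apply/eqP => h; have := unitA k; rewrite h unitr0.
  by rewrite nz -(horner_mx_X A) -rmorphXn hornerP.
have P0 : (0 : 'M_3) \in P by rewrite -(rmorph0 (horner_mx A)) hornerP.
rewrite cardX.
have -> : #|P :\ 0| = (#|F| ^ d).-1 by rewrite -cardP (cardsD1 0 P) P0.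
rewrite -subn1 leq_sub2r //.
by rewrite leq_pexp2l ?d_le3 // ltnW // q_gt1.
Qed.

Lemma Punit M : M \in P -> M != 0 -> exists k, M = A ^+ k.
Proof.
move=> PM nzM; have : M \in X by rewrite XP !inE nzM.
by case/imsetP => k _ ->; exists k.
Qed.

Lemma cardP3 : #|P| = (#|F| ^ 3)%N.
Proof.
have P0 : (0 : 'M_3) \in P by rewrite -(rmorph0 (horner_mx A)) hornerP.
rewrite (cardsD1 0 P) P0 -XP cardX add1n subn1 prednK //.
by rewrite expn_gt0 ltnW // q_gt1.
Qed.

Lemma key_c p (c : 'cV[F]_3) : c != 0 -> horner_mx A p *m c = 0 -> horner_mx A p = 0.
Proof.
move=> nzc h; apply/eqP; apply/negPn/negP => nzM.
have [k ek] := Punit (hornerP p) nzM.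
have := unitA k; rewrite -ek => uM.
by move/eqP: nzc; apply; rewrite -(mulKmx uM c) h mulmx0.
Qed.

Lemma eig_col k mu (c : 'cV[F]_3) : c != 0 -> A ^+ k *m c = mu *: c -> A ^+ k = mu%:M.
Proof.
move=> nzc h; apply/eqP; rewrite -subr_eq0; apply/eqP.
have -> : A ^+ k - mu%:M = horner_mx A ('X^k - mu%:P).
  by rewrite rmorphB /= rmorphXn /= horner_mx_X horner_mx_C.
apply: (key_c nzc).
by rewrite rmorphB /= rmorphXn /= horner_mx_X horner_mx_C mulmxBl h mul_scalar_mx subrr.
Qed.

Lemma trmxX (M : 'M[F]_3) k : (M ^+ k)^T = M^T ^+ k.
Proof.
elim: k => [|k IH]; first by rewrite !expr0 tr_scalar_mx.
by rewrite exprS -mulmxE trmx_mul IH mulmxE -exprSr.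
Qed.

Lemma eig_row k mu (w : 'rV[F]_3) : w != 0 -> w *m (A ^+ k)^T = mu *: w -> A ^+ k = mu%:M.
Proof.
move=> nzw h; apply: (eig_col (c := w^T)); first by rewrite trmx_eq0.
by rewrite -[A ^+ k]trmxK -trmx_mul h linearZ.
Qed.

Lemma trans_col (c z : 'cV[F]_3) : c != 0 -> z != 0 -> exists k, A ^+ k *m c = z.
Proof.
move=> nzc nzz.
pose f := fun M : 'M[F]_3 => M *m c.
have inj : {in P &, injective f}.
  move=> M1 M2 /imsetP[u1 _ ->] /imsetP[u2 _ ->] /= e.
  apply/eqP; rewrite -subr_eq0 -rmorphB; apply/eqP; apply: (key_c nzc).
  by rewrite rmorphB /= mulmxBl; move: e; rewrite /f => ->; rewrite subrr.
have : f @: P = setT.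
  apply/eqP; rewrite eqEcard subsetT /= card_in_imset // cardP3 cardsT card_mx muln1.
  by [].
move/setP/(_ z); rewrite inE => /imsetP[M PM ez].
have nzM : M != 0 by apply: contraNneq nzz => M0; rewrite ez /f M0 mul0mx.
by have [k ek] := Punit PM nzM; exists k; rewrite ez /f ek.
Qed.

Lemma trans_row (w z : 'rV[F]_3) : w != 0 -> z != 0 -> exists k, w *m (A ^+ k)^T = z.
Proof.
move=> nzw nzz; have [||k ek] := trans_col (c := w^T) (z := z^T); rewrite ?trmx_eq0 //.
by exists k; rewrite -[_ *m _]trmxK trmx_mul trmxK ek trmxK.
Qed.

End Singer.
Section Geo.
Variable F : finFieldType.

Definition blk (M : 'M[F]_3) : 'M[F]_(3+1) := block_mx M 0 0 1%:M.

Lemma blk_mul (x : 'rV[F]_(3+1)) M : x *m blk M = row_mx (lsubmx x *m M) (rsubmx x).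
Proof. by rewrite -{1}(hsubmxK x) mul_row_block !mulmx0 !addr0 add0r mulmx1. Qed.

Lemma blk_unit M : M \in unitmx -> blk M \in unitmx.
Proof. by rewrite !unitmxE /blk det_ublock det1 mulr1. Qed.

Lemma blkM M1 M2 : blk M1 *m blk M2 = blk (M1 *m M2).
Proof.
by rewrite /blk mulmx_block !mulmx0 !mul0mx !addr0 !add0r mulmx1.
Qed.

Lemma blk1 : blk 1%:M = 1%:M.
Proof. by rewrite /blk -scalar_mx_block. Qed.

Lemma onpi (x : 'rV[F]_(3+1)) : (x <= piPlane F)%MS = (rsubmx x == 0).
Proof.
rewrite /piPlane (@pid_mx_block _ 1 1 3); apply/idP/idP.
  case/submxP => z ->; rewrite -[z](@hsubmxK _ 1 3 1); rewrite (@mul_row_block _ 1 3 1 3 1) !mulmx0 !addr0 mulmx1.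
  by rewrite row_mxKr.
move/eqP => h; rewrite -(hsubmxK x) h.
apply/submxP; exists (row_mx (lsubmx x) 0).
by rewrite (@mul_row_block _ 1 3 1 3 1) !mulmx0 !addr0 mulmx1.
Qed.

Lemma TvecE : Tvec F = row_mx 0 1%:M :> 'rV_(3+1).
Proof.
apply/rowP => j; rewrite !mxE; case: splitP => i ej; rewrite !mxE /=.
  by rewrite -val_eqE /= ej ltn_eqF.
by rewrite -val_eqE /= ej (ord1 i) eqxx.
Qed.


Definition mkL (w v : 'rV[F]_3) : 'M[F]_(3+1) :=
  <<(row_mx w (0 : 'rV_1) + row_mx v (1%:M : 'rV_1))%MS>>%MS.
Definition mkP (v : 'rV[F]_3) : 'M[F]_(3+1) := <<row_mx v (1%:M : 'rV_1)>>%MS.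

Lemma mx11E (a b : F) : (a%:M : 'M[F]_1) = b%:M -> a = b.
Proof. by move/(congr1 (fun M : 'M[F]_1 => M 0 0)); rewrite !mxE eqxx !mulr1n. Qed.

Lemma mem_mkL w v (z : 'rV[F]_(3+1)) : (z <= mkL w v)%MS ->
  exists a b, lsubmx z = a *: w + b *: v /\ rsubmx z = b%:M.
Proof.
rewrite genmxE => /sub_addsmxP [[u1 u2] /= ->].
rewrite (mx11_scalar u1) (mx11_scalar u2) !mul_scalar_mx !scale_row_mx add_row_mx.
rewrite row_mxKl row_mxKr scaler0 add0r scalemx1.
by exists (u1 0 0), (u2 0 0).
Qed.

Lemma sub_mkL w v a b : (row_mx (a *: w + b *: v) (b%:M : 'rV_1) <= mkL w v)%MS.
Proof.
rewrite genmxE; apply/sub_addsmxP; exists (a%:M, b%:M) => /=.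
by rewrite !mul_scalar_mx !scale_row_mx add_row_mx scaler0 add0r scalemx1.
Qed.

Lemma rank_row1 (v : 'rV[F]_3) (t : 'rV[F]_1) : t != 0 -> \rank (row_mx v t) = 1%N.
Proof. by move=> nzt; rewrite rank_rV row_mx_eq0 negb_and nzt orbT. Qed.

Lemma one11_neq0 : (1%:M : 'rV[F]_1) != 0.
Proof. by apply/eqP => /(congr1 (fun M : 'M[F]_1 => M 0 0)); rewrite !mxE eqxx mulr1n; apply/eqP; exact: oner_neq0. Qed.

Lemma rank_mkL w v : w != 0 -> ~~ (v <= w)%MS -> \rank (mkL w v) = 2%N.
Proof.
move=> nzw nvw; rewrite mxrank_gen.
set x := row_mx w (0 : 'rV_1); set y := row_mx v (1%:M : 'rV_1).
have rx : \rank x = 1%N by rewrite rank_rV row_mx_eq0 negb_and nzw.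
have ry : \rank y = 1%N by rewrite rank_row1 // one11_neq0.
apply/eqP; rewrite eqn_leq; apply/andP; split.
  by have := (mxrank_adds_leqif x y).1; rewrite rx ry.
suff lt : (x < x + y)%MS by have := rank_ltmx lt; rewrite rx.
rewrite ltmxE addsmxSl /= addsmx_sub submx_refl /=.
apply/negP => /sub_rVP [c ec].
have := congr1 rsubmx ec; rewrite /x /y linearZ /= !row_mxKr scaler0.
by move/eqP; rewrite (negbTE one11_neq0).
Qed.

Lemma mkL_in_Lset w v : w != 0 -> ~~ (v <= w)%MS -> mkL w v \in Lset F.
Proof.
move=> nzw nvw; rewrite !inE rank_mkL // /mkL genmx_id eqxx /=.
rewrite eqxx /= !genmxE; apply/andP; split.
  apply/negP => /(submx_trans (addsmxSr _ _)); rewrite onpi row_mxKr.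
  by rewrite (negbTE one11_neq0).
rewrite TvecE; apply/negP => hT.
have : (row_mx (0 : 'rV_3) (1%:M : 'rV_1) <= mkL w v)%MS by rewrite genmxE.
case/mem_mkL => a [b []]; rewrite row_mxKl row_mxKr => e0 /mx11E e1.
move/negP: nvw; apply; apply/sub_rVP; exists (- a).
by move/eqP: e0; rewrite -e1 scale1r eq_sym addr_eq0 => /eqP h; rewrite scaleNr h opprK.
Qed.


Lemma rank_pi : \rank (piPlane F) = 3%N.
Proof. by rewrite rank_pid_mx. Qed.

Lemma Lset_mkL U : U \in Lset F ->
  exists w v, [/\ w != 0, ~~ (v <= w)%MS & U = mkL w v].
Proof.
rewrite !inE => /and3P[/andP[/eqP rU /eqP gU] nUpi nTU].
have : (0 < \rank (U :&: piPlane F)%MS)%N.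
  have := mxrank_sum_cap U (piPlane F); rewrite rU rank_pi.
  have := rank_leq_col (U + piPlane F)%MS; lia.
rewrite lt0n mxrank_eq0 => nzcap.
pose x : 'rV[F]_(3+1) := nz_row (U :&: piPlane F)%MS.
have nzx : x != 0 by rewrite nz_row_eq0.
have xU : (x <= U)%MS := submx_trans (nz_row_sub _) (capmxSl _ _).
have xpi : (x <= piPlane F)%MS := submx_trans (nz_row_sub _) (capmxSr _ _).
case/row_subPn: nUpi => i ni.
pose y0 : 'rV[F]_(3+1) := row i U.
have y0U : (y0 <= U)%MS by exact: row_sub.
set w := lsubmx (x : 'rV_(3+1)).
have hx : x = row_mx w 0 :> 'rV_(3+1).
  by rewrite -[x](@hsubmxK _ 1 3 1); congr row_mx; apply/eqP; rewrite -onpi.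
have nzw : w != 0 by apply: contraNneq nzx => w0; rewrite hx w0 row_mx0.
set t0 := rsubmx (y0 : 'rV_(3+1)) 0 0.
have ht0 : rsubmx (y0 : 'rV_(3+1)) = t0%:M by exact: mx11_scalar.
have nzt0 : t0 != 0.
  by apply: contraNneq ni => t00; rewrite onpi ht0 t00 -scalemx1 scale0r.
set y := t0^-1 *: (y0 : 'rV_(3+1)).
set v := lsubmx y.
have hy : y = row_mx v 1%:M.
  rewrite -[y](@hsubmxK _ 1 3 1); congr row_mx.
  by rewrite /y linearZ /= ht0 scale_scalar_mx mulVf.
have yU : (y <= U)%MS by rewrite scalemx_sub.
have nvw : ~~ (v <= w)%MS.
  apply/negP => /sub_rVP [c ec]; move/negP: nTU; apply.
  have -> : Tvec F = y + (- c) *: x.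
    by rewrite TvecE hy hx scale_row_mx add_row_mx ec scaler0 addr0 scaleNr addrN.
  by rewrite addmx_sub ?scalemx_sub.
exists w, v; split => //.
have sub : (mkL w v <= U)%MS by rewrite genmxE addsmx_sub -hx -hy xU yU.
have e : (mkL w v == U)%MS by rewrite -(mxrank_leqif_eq sub).2 rank_mkL // rU.
by move/genmxP: e; rewrite {1}/mkL genmx_id gU.
Qed.


Lemma normP (y0 : 'rV[F]_(3+1)) : ~~ (y0 <= piPlane F)%MS ->
  exists v t, t != 0 /\ row_mx v 1%:M = t *: y0.
Proof.
move=> ni.
set t0 := rsubmx y0 0 0.
have ht0 : rsubmx y0 = t0%:M by exact: mx11_scalar.
have nzt0 : t0 != 0.
  by apply: contraNneq ni => t00; rewrite onpi ht0 t00 -scalemx1 scale0r.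
exists (lsubmx (t0^-1 *: y0)), t0^-1; split; first by rewrite invr_eq0.
rewrite -[RHS](@hsubmxK _ 1 3 1); congr row_mx.
by rewrite linearZ /= ht0 scale_scalar_mx mulVf.
Qed.

Lemma mkP_in_Pset v : v != 0 -> mkP v \in Pset F.
Proof.
move=> nzv; rewrite !inE /mkP mxrank_gen rank_row1 ?one11_neq0 // genmx_id.
rewrite genmxE onpi row_mxKr one11_neq0 !eqxx /=.
rewrite /Tpoint; apply/negP => /eqP e; have /andP[/sub_rVP [a ea] _] := introT genmxP e.
move/negP: nzv; apply; have := congr1 (@lsubmx _ 1 3 1) ea.
by rewrite TvecE linearZ /= !row_mxKl scaler0 => ->.
Qed.

Lemma mkP_inj v v' : mkP v = mkP v' -> v = v'.
Proof.
move=> e; have : (row_mx v 1%:M <= mkP v')%MS by rewrite -e genmxE.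
rewrite genmxE => /sub_rVP [a ea].
have := congr1 rsubmx ea; rewrite linearZ /= !row_mxKr scalemx1 => /mx11E a1.
by have := congr1 lsubmx ea; rewrite linearZ /= !row_mxKl -a1 scale1r.
Qed.

Lemma Pset_mkP p : p \in Pset F -> exists2 v, v != 0 & p = mkP v.
Proof.
rewrite !inE => /and3P[/andP[/eqP rp /eqP gp] npi nT].
case/row_subPn: npi => i ni.
have [v [t [nzt ev]]] := normP ni.
have sub : (row_mx v 1%:M <= p)%MS by rewrite ev scalemx_sub // row_sub.
have e : (row_mx v 1%:M == p)%MS.
  by rewrite -(mxrank_leqif_eq sub).2 rank_row1 ?one11_neq0 // rp.
have pE : p = mkP v by move/genmxP: e; rewrite gp.
exists v => //; apply: contraNneq nT => v0.
by rewrite pE v0 /mkP /Tpoint TvecE.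
Qed.

Lemma card_Pset : #|Pset F| = (#|F| ^ 3 - 1)%N.
Proof.
have -> : Pset F = mkP @: [set v : 'rV[F]_3 | v != 0].
  apply/setP => p; apply/idP/imsetP => [/Pset_mkP [v nzv ->]|[v]].
    by exists v; rewrite ?inE.
  by rewrite inE => nzv ->; exact: mkP_in_Pset.
rewrite card_in_imset; last by move=> ? ? _ _; exact: mkP_inj.
have := cardC1 (0 : 'rV[F]_3); rewrite card_mx mul1n subn1 => <-.
by apply: eq_card => v; rewrite !inE.
Qed.

Lemma pact_comp (g h U : 'M[F]_4) : pact g (pact h U) = pact (g *m h) U.
Proof.
rewrite /pact; apply: eq_genmx.
by rewrite trmx_mul mulmxA; apply: eqmxMr; exact: genmxE.
Qed.

Lemma trblk M : (blk M)^T = blk M^T.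
Proof. by rewrite /blk tr_block_mx !trmx0 tr_scalar_mx. Qed.

Lemma pact_blk M U : pact (blk M) U = <<U *m blk M^T>>%MS.
Proof. by rewrite /pact trblk. Qed.

Lemma pact_mkL M w v : pact (blk M) (mkL w v) = mkL (w *m M^T) (v *m M^T).
Proof.
rewrite pact_blk /mkL; apply: eq_genmx.
apply: (eqmx_trans (eqmxMr _ (genmxE _))).
apply: (eqmx_trans (addsmxMr _ _ _)).
by rewrite !blk_mul !row_mxKl !row_mxKr; exact: eqmx_refl.
Qed.

Lemma pact_mkP M v : pact (blk M) (mkP v) = mkP (v *m M^T).
Proof.
rewrite pact_blk /mkP; apply: eq_genmx.
apply: (eqmx_trans (eqmxMr _ (genmxE _))).
by rewrite !blk_mul !row_mxKl !row_mxKr; exact: eqmx_refl.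
Qed.

Lemma mx11E0 (b : F) : (0 : 'M[F]_1) = b%:M -> b = 0.
Proof. by rewrite -(scale0r (1%:M : 'M[F]_1)) scalemx1 => /mx11E. Qed.

Lemma sub_mkL0 w v a : (row_mx (a *: w) (0 : 'rV_1) <= mkL w v)%MS.
Proof.
have := sub_mkL w v a 0; rewrite scale0r addr0.
by rewrite -(scale0r (1%:M : 'M[F]_1)) scalemx1.
Qed.

Lemma sub_mkL1 w v a : (row_mx (a *: w + v) (1%:M : 'rV_1) <= mkL w v)%MS.
Proof. by have := sub_mkL w v a 1; rewrite scale1r. Qed.

Lemma mkL_eq w v w' v' : (mkL w v <= mkL w' v')%MS -> (mkL w' v' <= mkL w v)%MS ->
  mkL w v = mkL w' v'.
Proof.
move=> h1 h2; rewrite /mkL in h1 h2 *; rewrite !genmxE in h1 h2.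
by apply/genmxP; rewrite h1 h2.
Qed.

Lemma mkL_norm w v v' a b : a != 0 -> v' = v + b *: w -> mkL (a *: w) v' = mkL w v.
Proof.
move=> nza ->; apply: mkL_eq; rewrite {1}/mkL genmxE addsmx_sub; apply/andP; split.
- exact: sub_mkL0.
- by rewrite addrC sub_mkL1.
- have := sub_mkL0 (a *: w) (v + b *: w) a^-1.
  by rewrite scalerA mulVf // scale1r.
- have := sub_mkL1 (a *: w) (v + b *: w) (- (b / a)).
  by rewrite scalerA mulNr divfK // scaleNr addrC addrK.
Qed.

Definition j1 : 'I_3 := Ordinal (isT : (1 < 3)%N).
Definition j2 : 'I_3 := Ordinal (isT : (2 < 3)%N).
Definition e1 : 'rV[F]_3 := delta_mx 0 0.
Definition rep (o : option F) : 'rV[F]_3 :=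
  match o with
  | Some t => delta_mx 0 j1 + t *: delta_mx 0 j2
  | None => delta_mx 0 j2
  end.

Lemma row3P (x y : 'rV[F]_3) : x 0 0 = y 0 0 -> x 0 j1 = y 0 j1 -> x 0 j2 = y 0 j2 -> x = y.
Proof.
move=> h0 h1 h2; apply/rowP => -[[|[|[|m]]] Hj] //.
- by rewrite (_ : Ordinal Hj = 0) //; apply: val_inj.
- by rewrite (_ : Ordinal Hj = j1) //; apply: val_inj.
- by rewrite (_ : Ordinal Hj = j2) //; apply: val_inj.
Qed.

Lemma e1_neq0 : e1 != 0.
Proof. by apply/eqP => /rowP/(_ 0); rewrite !mxE eqxx /=; apply/eqP; exact: oner_neq0. Qed.

Lemma rep_nsub o : ~~ (rep o <= e1)%MS.
Proof.
apply/negP => /sub_rVP [c e].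
case: o e => [t|] e.
  have := congr1 (fun x : 'rV_3 => x 0 j1) e; rewrite !mxE /=.
  by rewrite mulr0 addr0 mulr0 => /eqP; rewrite oner_eq0.
have := congr1 (fun x : 'rV_3 => x 0 j2) e; rewrite !mxE /=.
by rewrite mulr0 => /eqP; rewrite oner_eq0.
Qed.

Lemma Lrep_in o : mkL e1 (rep o) \in Lset F.
Proof. exact: mkL_in_Lset e1_neq0 (rep_nsub o). Qed.
End Geo.

Arguments e1 {F}.
Arguments e1_neq0 {F}.
Section Grp.
Variable F : finFieldType.
Variable s : {'GL_3[F]}.
Hypothesis Hs : #[s]%g = (#|F| ^ 3 - 1)%N.
Local Notation A := (GLval s).
Local Notation N := (#|F| ^ 3 - 1)%N.

Lemma CgroupP g : reflect (exists k, g = blk (A ^+ k)) (g \in Cgroup s).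
Proof.
apply: (iffP imsetP) => [[a /cycleP [k ->] ->]|[k ->]].
  by exists k; rewrite GLvalX.
by exists (s ^+ k)%g; rewrite ?mem_cycle // GLvalX.
Qed.

Lemma AN : A ^+ N = 1.
Proof. by rewrite -GLvalX -Hs expg_order. Qed.

Lemma N_gt0 : (0 < N)%N.
Proof. by rewrite subn_gt0 -{1}(exp1n 3) ltn_exp2r // q_gt1. Qed.

Lemma AXinv i j : A ^+ (i + j * N.-1) * A ^+ j = A ^+ i.
Proof.
rewrite -exprD -addnA -mulnSr (prednK N_gt0) exprD mulnC exprM AN expr1n mulr1.
by [].
Qed.

Lemma blkX i j : blk (A ^+ i) *m blk (A ^+ j) = blk (A ^+ (i + j)).
Proof. by rewrite blkM mulmxE exprD. Qed.

Lemma CorbitP U V : reflect (exists k, V = pact (blk (A ^+ k)) U) (V \in Corbit s U).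
Proof.
apply: (iffP imsetP) => [[g /CgroupP [k ->] ->]|[k ->]]; first by exists k.
by exists (blk (A ^+ k)) => //; apply/CgroupP; exists k.
Qed.

Lemma orbit_eq U j : Corbit s (pact (blk (A ^+ j)) U) = Corbit s U.
Proof.
apply/setP => V; apply/CorbitP/CorbitP => [[i ->]|[i ->]].
  by exists (i + j)%N; rewrite pact_comp blkX.
exists (i + j * N.-1)%N; rewrite pact_comp blkX; congr (pact (blk _) U).
by rewrite exprD AXinv.
Qed.


Lemma unitB k : (A ^+ k)^T \in unitmx.
Proof. by rewrite unitmx_tr; exact: unitA. Qed.

Lemma fixL k U : U \in Lset F -> pact (blk (A ^+ k)) U = U -> A ^+ k = 1.
Proof.
case/Lset_mkL => w [v [nzw nvw ->]]; rewrite pact_mkL => e.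
have : (row_mx (w *m (A ^+ k)^T) (0 : 'rV_1) <= mkL w v)%MS.
  by rewrite -e genmxE addsmxSl.
case/mem_mkL => a [b []]; rewrite row_mxKl row_mxKr => ea /mx11E0 b0.
rewrite b0 scale0r addr0 in ea.
have Ak : A ^+ k = a%:M := eig_row Hs nzw ea.
have : (row_mx (v *m (A ^+ k)^T) (1%:M : 'rV_1) <= mkL w v)%MS.
  by rewrite -e genmxE addsmxSr.
rewrite Ak tr_scalar_mx mul_mx_scalar.
case/mem_mkL => a' [b' []]; rewrite row_mxKl row_mxKr => ea' /mx11E b1.
rewrite -b1 scale1r in ea'.
have [a1|na1] := eqVneq a 1; first by rewrite a1.
move/negP: nvw; case; apply/sub_rVP; exists ((a - 1)^-1 * a').
have h : a' *: w = (a - 1) *: v by rewrite scalerBl scale1r ea' addrK.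
by rewrite -scalerA h scalerA mulVf ?scale1r // subr_eq0.
Qed.

Lemma fixP k p : p \in Pset F -> pact (blk (A ^+ k)) p = p -> A ^+ k = 1.
Proof.
case/Pset_mkP => v nzv ->; rewrite pact_mkP => /mkP_inj e.
have : v *m (A ^+ k)^T = 1 *: v by rewrite e scale1r.
by move/(eig_row Hs nzv) ->.
Qed.

Lemma card_C : #|Cgroup s| = N.
Proof.
rewrite card_in_imset -?orderE ?Hs // => a b _ _ /= e.
by apply: val_inj; have := congr1 (@ulsubmx _ 3 1 3 1) e; rewrite !block_mxKul.
Qed.

Lemma pact1 (U : 'M[F]_4) : pact (1%:M : 'M[F]_4) U = <<U>>%MS.
Proof. by rewrite /pact tr_scalar_mx mulmx1. Qed.

Lemma pact_inj U : U \in Lset F -> {in Cgroup s &, injective (fun g => pact g U)}.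
Proof.
move=> LU g h /CgroupP [i ->] /CgroupP [j ->] /= e.
have := congr1 (pact (blk (A ^+ (j * N.-1)))) e; rewrite !pact_comp !blkX.
have -> : A ^+ (j * N.-1 + j) = 1 by rewrite exprD; have := AXinv 0 j; rewrite add0n expr0.
rewrite blk1 pact1; move: (LU); rewrite !inE => /and3P[/andP[_ /eqP ->] _ _].
move/(fixL LU) => h1; congr blk.
by rewrite -(AXinv i j) [(i + _)%N]addnC h1 mul1r.
Qed.

Lemma card_orbit U : U \in Lset F -> #|Corbit s U| = N.
Proof. by move=> LU; rewrite /Corbit card_in_imset ?card_C //; exact: pact_inj. Qed.

Lemma Lset_inv g U : g \in Cgroup s -> U \in Lset F -> pact g U \in Lset F.
Proof.
case/CgroupP => k -> /Lset_mkL [w [v [nzw nvw ->]]]; rewrite pact_mkL.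
have fr : row_free (A ^+ k)^T by rewrite row_free_unit unitB.
apply: mkL_in_Lset; last by rewrite submxMfree.
by apply: contraNneq nzw => h; rewrite -(mulmxK (unitB k) w) h mul0mx.
Qed.

Lemma Pset_inv g p : g \in Cgroup s -> p \in Pset F -> pact g p \in Pset F.
Proof.
case/CgroupP => k -> /Pset_mkP [v nzv ->]; rewrite pact_mkP.
apply: mkP_in_Pset.
by apply: contraNneq nzv => h; rewrite -(mulmxK (unitB k) v) h mul0mx.
Qed.

Lemma semireg g p : g \in Cgroup s -> p \in Pset F -> pact g p = p -> g = 1%:M.
Proof.
by case/CgroupP => k -> Pp /(fixP Pp) h; rewrite h blk1.
Qed.

Lemma orbit_surj U : U \in Lset F -> exists o, Corbit s U = Corbit s (mkL e1 (rep o)).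
Proof.
case/Lset_mkL => w [v [nzw nvw ->]].
have [k1 ek1] := trans_row Hs nzw e1_neq0.
set v' := v *m (A ^+ k1)^T.
have nv' : ~~ (v' <= e1)%MS by rewrite -ek1 submxMfree // row_free_unit unitB.
rewrite -(orbit_eq (mkL w v) k1) pact_mkL ek1 -/v'; clearbody v'.
have [o [mu [nzmu hv]]] : exists o mu, mu != 0 /\ mu *: v' = rep o + (mu * v' 0 0) *: e1.
  have [h1|h1] := eqVneq (v' 0 j1) 0.
    have h2 : v' 0 j2 != 0.
      apply: contraNneq nv' => h2; apply/sub_rVP; exists (v' 0 0).
      by apply: row3P; rewrite !mxE /= ?mulr1 ?mulr0 // ?h1 ?h2.
    exists None, (v' 0 j2)^-1; split; first by rewrite invr_eq0.
    apply: row3P; rewrite !mxE /= ?mulr1 ?mulr0 ?add0r ?addr0 ?h1 ?mulr0 ?mulVf //.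
  exists (Some (v' 0 j2 / v' 0 j1)), (v' 0 j1)^-1; split; first by rewrite invr_eq0.
  apply: row3P; rewrite !mxE /= ?mulr1 ?mulr0 ?add0r ?addr0 ?mulVf //.
  by rewrite mulrC.
have nz : mu *: e1 != 0 by rewrite scaler_eq0 negb_or nzmu e1_neq0.
have [k2 ek2] := trans_row Hs e1_neq0 nz.
have Ak2 := eig_row Hs e1_neq0 ek2.
rewrite -(orbit_eq (mkL e1 v') k2) pact_mkL Ak2 tr_scalar_mx !mul_mx_scalar.
by rewrite (mkL_norm nzmu hv); exists o.
Qed.

Lemma rep_inj o o' : Corbit s (mkL e1 (rep o)) = Corbit s (mkL e1 (rep o')) -> o = o'.
Proof.
move=> e.
have : mkL e1 (rep o') \in Corbit s (mkL e1 (rep o)).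
  by rewrite e; apply/CorbitP; exists 0%N; rewrite expr0 blk1 pact1 /mkL genmx_id.
case/CorbitP => k; rewrite pact_mkL => ek.
have : (row_mx (e1 *m (A ^+ k)^T) (0 : 'rV_1) <= mkL e1 (rep o'))%MS.
  by rewrite ek genmxE addsmxSl.
case/mem_mkL => a [b []]; rewrite row_mxKl row_mxKr => ea /mx11E0 b0.
rewrite b0 scale0r addr0 in ea.
have Ak := eig_row Hs e1_neq0 ea.
have : (row_mx (rep o *m (A ^+ k)^T) (1%:M : 'rV_1) <= mkL e1 (rep o'))%MS.
  by rewrite ek genmxE addsmxSr.
rewrite Ak tr_scalar_mx mul_mx_scalar.
case/mem_mkL => a' [b' []]; rewrite row_mxKl row_mxKr => ea' /mx11E b1.
rewrite -b1 scale1r in ea'.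
have E1 := congr1 (fun x : 'rV_3 => x 0 j1) ea'.
have E2 := congr1 (fun x : 'rV_3 => x 0 j2) ea'.
move: E1 E2; clear e ek ea'; case: o o' => [t|] [t'|] //=; rewrite !mxE /= ?mulr1 ?mulr0 ?add0r ?addr0.
- by rewrite mulr1 => ->; rewrite mul1r => ->.
- by rewrite mulr1 => ->; rewrite mul0r => /eqP; rewrite eq_sym oner_eq0.
- by move=> /eqP; rewrite eq_sym oner_eq0.
Qed.

Lemma orbits_card : #|[set Corbit s U | U in Lset F]| = (#|F| + 1)%N.
Proof.
have -> : [set Corbit s U | U in Lset F] = [set Corbit s (mkL e1 (rep o)) | o : option F].
  apply/setP => O; apply/imsetP/imsetP => [[U LU ->]|[o _ ->]].
    by have [o eo] := orbit_surj LU; exists o.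
  by exists (mkL e1 (rep o)) => //; exact: Lrep_in.
rewrite card_imset; first by rewrite card_option addn1.
by move=> o o'; exact: rep_inj.
Qed.
End Grp.

Local Close Scope ring_scope.

Theorem lemma3p4 (F : finFieldType) (sigma : {'GL_3[F]})
  (Hsinger : #[sigma]%g = (#|F| ^ 3 - 1)%N) :
  let C := Cgroup sigma in
  (* C acts on the set of lines not in pi and not through T *)
  (forall g U, g \in C -> U \in Lset F -> pact g U \in Lset F) /\
  (* it has q+1 orbits on them, each of size q^3-1 *)
  #|[set Corbit sigma U | U in Lset F]| = (#|F| + 1)%N /\
  (forall U, U \in Lset F -> #|Corbit sigma U| = (#|F| ^ 3 - 1)%N) /\
  (* there are q^3-1 points off pi and different from T *)
  #|Pset F| = (#|F| ^ 3 - 1)%N /\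
  (forall g p, g \in C -> p \in Pset F -> pact g p \in Pset F) /\
  (* C acts semiregularly on them: only the identity fixes such a point *)
  (forall g p, g \in C -> p \in Pset F -> pact g p = p -> g = (1%:M)%R).
Proof.
move=> C; split; [|split; [|split; [|split; [|split]]]].
- by move=> g U; exact: Lset_inv.
- exact: (@orbits_card F sigma Hsinger).
- by move=> U; exact: (@card_orbit F sigma Hsinger U).
- exact: card_Pset.
- by move=> g p; exact: Pset_inv.
- move=> g p; exact: (@semireg F sigma Hsinger g p).
Qed.
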